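(* Let $X$ be a real Banach space and $h:X\times X^*\to\mathbb{R}\cup\{\pm\infty\}$ such that $(\mathcal{J}h)(x,x^* )\geq\langle x,x^*\rangle$ for all $(x,x^* )\in X\times X^*$. Then $$P_2(D(\mathcal{J}h))=P_1\big(D(h^* )\cap(X^*\times X)\big)\subseteq\mathrm{cl}_{w*}\,\mathrm{conv}\,P_2(D(h)),$$ $$P_1(D(\mathcal{J}h))=P_2\big(D(h^* )\cap(X^*\times X)\big)\subseteq\mathrm{cl}\,\mathrm{conv}\,P_1(D(h)).$$
   Context: $X$ is identified with its canonical image in $X^{**}$. $P_1,P_2$ are the canonical projections of a Cartesian product onto its factors; $D(f)=\{z\;|\;f(z)<\infty\}$. The conjugate of $h$ is $h^*:X^*\times X^{**}\to\mathbb{R}\cup\{\pm\infty\}$, $h^*(x^*,x^{**})=\sup_{(y,y^* )}\langle y,x^*\rangle+\langle x^{**},y^*\rangle-h(y,y^* )$, and $(\mathcal{J}h)(x,x^* )=h^*(x^*,x)$. $\mathrm{cl}$ is norm closure, $\mathrm{cl}_{w*}$ weak-$*$ closure in $X^*$, $\mathrm{conv}$ convex hull. *)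

(* Defs.v *)
From HB Require Import structures.
From mathcomp Require Import all_boot all_order all_algebra.
From mathcomp Require Import all_classical all_reals all_analysis.
Set Implicit Arguments. Unset Strict Implicit. Unset Printing Implicit Defensive.
Import Order.TTheory GRing.Theory Num.Theory.
Import numFieldNormedType.Exports.
Local Open Scope classical_set_scope.
Local Open Scope ring_scope.

Section Defs.
Variables (R : realType) (X : normedModType R).

Definition dual : set (X -> R) :=
  [set f | (forall (a : R) (x y : X), f (a *: x + y) = a * f x + f y)
           /\ continuous f].

(* Fenchel conjugate of h : X x Xdual -> \bar R, evaluated at (xs, xss),
   where xss in Xbidual is given by its action on Xdual. *)
Definition hconj (h : X -> (X -> R) -> \bar R) (xs : X -> R)
    (xss : (X -> R) -> R) : \bar R :=
  ereal_sup [set ((xs p.1 + xss p.2)%:E - h p.1 p.2)%E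
            | p in [set p : X * (X -> R) | dual p.2]].

Definition canon (x : X) : (X -> R) -> R := fun ys => ys x.

Definition Jh (h : X -> (X -> R) -> \bar R) (x : X) (xs : X -> R) : \bar R :=
  hconj h xs (canon x).

Definition domh (h : X -> (X -> R) -> \bar R) : set (X * (X -> R)) :=
  [set p | dual p.2 /\ (h p.1 p.2 < +oo)%E].

Definition domJh (h : X -> (X -> R) -> \bar R) : set (X * (X -> R)) :=
  [set p | dual p.2 /\ (Jh h p.1 p.2 < +oo)%E].

(* D(hconj) \cap (Xdual x X), X identified with its canonical image in Xbidual *)
Definition domconjX (h : X -> (X -> R) -> \bar R) : set ((X -> R) * X) :=
  [set p | dual p.1 /\ (hconj h p.1 (canon p.2) < +oo)%E].

Definition convX (S : set X) : set X :=
  [set x | exists (n : nat) (w : 'I_n -> R) (p : 'I_n -> X),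
     [/\ forall i, 0 <= w i, \sum_(i < n) w i = 1, forall i, S (p i)
       & x = \sum_(i < n) w i *: p i]].

Definition convD (S : set (X -> R)) : set (X -> R) :=
  [set f | exists (n : nat) (w : 'I_n -> R) (p : 'I_n -> X -> R),
     [/\ forall i, 0 <= w i, \sum_(i < n) w i = 1, forall i, S (p i)
       & f = (fun x => \sum_(i < n) w i * p i x)]].

(* weak-star closure in Xdual: every basic weak-star neighbourhood
   {g | |g x_k - f x_k| < e, k < m} of f meets S *)
Definition wstar_closure (S : set (X -> R)) : set (X -> R) :=
  [set f | dual f /\
     forall (m : nat) (xs : 'I_m -> X) (e : R), 0 < e ->
       exists g, S g /\ forall k, `|g (xs k) - f (xs k)| < e].

End Defs.

(* Main.v *)
Require Import Defs.
From HB Require Import structures.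
From mathcomp Require Import all_boot all_order all_algebra.
From mathcomp Require Import all_classical all_reals all_analysis.
From mathcomp Require Import ring lra.
Import Order.TTheory GRing.Theory Num.Theory.
Import numFieldNormedType.Exports.
Local Open Scope classical_set_scope.
Local Open Scope ring_scope.
Set Implicit Arguments. Unset Strict Implicit. Unset Printing Implicit Defensive.
Section HB.
Variables (R : realType) (V : lmodType R).

Definition lin_on (L : set V) (f : V -> R) :=
  forall a u w, L u -> L w -> f (a *: u + w) = a * f u + f w.
Definition subsp (L : set V) :=
  L 0 /\ (forall a u w, L u -> L w -> L (a *: u + w)).

Lemma lin_on0 L f : subsp L -> lin_on L f -> f 0 = 0.
Proof.
move=> [L0 _] lf; have := lf 1 0 0 L0 L0.
rewrite scaler0 addr0 mul1r; lra.
Qed.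

Lemma lin_onZ L f a u : subsp L -> lin_on L f -> L u -> f (a *: u) = a * f u.
Proof.
move=> sL lf Lu; have := lf a u 0 Lu sL.1.
by rewrite addr0 (lin_on0 sL lf) addr0.
Qed.

Lemma lin_onD L f u w : subsp L -> lin_on L f -> L u -> L w -> f (u + w) = f u + f w.
Proof. by move=> sL lf Lu Lw; have := lf 1 u w Lu Lw; rewrite scale1r mul1r. Qed.

Lemma subspZ L a u : subsp L -> L u -> L (a *: u).
Proof. by move=> [L0 LL] Lu; have := LL a u 0 Lu L0; rewrite addr0. Qed.

Lemma subspD L u w : subsp L -> L u -> L w -> L (u + w).
Proof. by move=> [L0 LL] Lu Lw; have := LL 1 u w Lu Lw; rewrite scale1r. Qed.

Variable p : V -> R.
Hypothesis psub : forall u w, p (u + w) <= p u + p w.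
Hypothesis phom : forall a u, 0 < a -> p (a *: u) = a * p u.

Lemma p0 : p 0 = 0.
Proof.
have h2 : (0:R) < 2 by lra.
have := phom 0 h2; rewrite scaler0; lra.
Qed.

Lemma hb_step L f z1 c :
  subsp L -> lin_on L f -> (forall u, L u -> f u <= p u) -> ~ L z1 ->
  (forall u, L u -> f u - p (u - z1) <= c) ->
  (forall u, L u -> c <= p (u + z1) - f u) ->
  exists g, subsp [set w | exists u s, L u /\ w = u + s *: z1] /\
    lin_on [set w | exists u s, L u /\ w = u + s *: z1] g /\
    (forall w, (exists u s, L u /\ w = u + s *: z1) -> g w <= p w) /\
    (forall u s, L u -> g (u + s *: z1) = f u + s * c).
Proof.
move=> sL lf fp nz1 clo chi.
have uniq u s u' s' : L u -> L u' -> u + s *: z1 = u' + s' *: z1 -> u = u' /\ s = s'.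
  move=> Lu Lu' E.
  have ss : s = s'.
    apply/eqP; apply/negPn/negP => ns; apply: nz1.
    have : z1 = (s - s')^-1 *: (u' - u).
      apply: (@scalerI _ _ (s - s')); first by rewrite subr_eq0.
      rewrite scalerA mulfV ?subr_eq0 // scale1r scalerBl.
      apply: (@addIr _ (u + s' *: z1)).
      by rewrite addrACA addNr addr0 addrC E addrA subrK.
    move=> ->; apply: subspZ => //; apply: subspD => //.
    by rewrite -scaleN1r; apply: subspZ.
  by split=> //; move: E; rewrite ss => /addIr.
pose g (w : V) : R := match pselect (exists us : V * R, L us.1 /\ w = us.1 + us.2 *: z1) with
  | left e => (f (proj1_sig (cid e)).1 + (proj1_sig (cid e)).2 * c)
  | right _ => 0 end.
have gE u s : L u -> g (u + s *: z1) = f u + s * c.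
  move=> Lu; rewrite /g; case: pselect => [e|]; last first.
    by move=> N; exfalso; apply: N; exists (u, s).
  case: (cid e) => [[u' s'] /= [Lu' E]].
  by have [-> ->] := uniq _ _ _ _ Lu Lu' E.
exists g; split; [|split; [|split]] => //.
- split; first by exists 0, 0; rewrite scale0r addr0; split=> //; exact: sL.1.
  move=> a _ _ [u [s [Lu ->]]] [u' [s' [Lu' ->]]].
  exists (a *: u + u'), (a * s + s'); split; first by apply: sL.2.
  by rewrite scalerDr scalerA addrACA scalerDl.
- move=> a _ _ [u [s [Lu ->]]] [u' [s' [Lu' ->]]].
  have -> : a *: (u + s *: z1) + (u' + s' *: z1) = (a *: u + u') + (a * s + s') *: z1.
    by rewrite scalerDr scalerA addrACA scalerDl.
  rewrite !gE //; last by apply: sL.2.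
  rewrite (lf _ _ _ Lu Lu'); ring.
- move=> _ [u [s [Lu ->]]]; rewrite gE //.
  case: (ltrgtP s 0) => [s0|s0|->]; last by rewrite scale0r addr0 mul0r addr0 fp.
  + pose t := - s; have t0 : 0 < t by rewrite oppr_gt0.
    pose y := t^-1 *: u.
    have Ly : L y by apply: subspZ.
    have uy : u = t *: y by rewrite /y scalerA mulfV ?gt_eqF // scale1r.
    have -> : u + s *: z1 = t *: (y - z1).
      by rewrite scalerBr -uy /t scaleNr opprK.
    rewrite phom // {1}uy (lin_onZ _ sL lf Ly).
    have := clo _ Ly; rewrite /t in t0 *; nra.
  + pose y := s^-1 *: u.
    have Ly : L y by apply: subspZ.
    have uy : u = s *: y by rewrite /y scalerA mulfV ?gt_eqF // scale1r.
    have -> : u + s *: z1 = s *: (y + z1) by rewrite scalerDr -uy.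
    rewrite phom // {1}uy (lin_onZ _ sL lf Ly).
    have := chi _ Ly; nra.
Qed.

Definition goodf (Lb : set V) (fb : V -> R) (t : set V * (V -> R)) :=
  [/\ subsp t.1, lin_on t.1 t.2, (forall u, t.1 u -> t.2 u <= p u),
      Lb `<=` t.1 & (forall u, Lb u -> t.2 u = fb u)].

Lemma hb_extend Lb fb :
  subsp Lb -> lin_on Lb fb -> (forall u, Lb u -> fb u <= p u) ->
  exists F : V -> R, (forall a u w, F (a *: u + w) = a * F u + F w) /\
    (forall u, F u <= p u) /\ (forall u, Lb u -> F u = fb u).
Proof.
move=> sb lb db.
pose T := {t : set V * (V -> R) | goodf Lb fb t}.
have gb : goodf Lb fb (Lb, fb) by split.
pose t0 : T := exist _ (Lb, fb) gb.
pose le (a b : T) : bool :=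
  `[< (sval a).1 `<=` (sval b).1 /\ forall u, (sval a).1 u -> (sval b).2 u = (sval a).2 u >].
have leP a b : le a b <-> ((sval a).1 `<=` (sval b).1 /\ forall u, (sval a).1 u -> (sval b).2 u = (sval a).2 u).
  by rewrite /le; split => [/asboolP|?]; [|apply/asboolP].
have [t tmax] : exists t, premaximal (fun x y => le x y) t.
apply: (@ZL_preorder T t0 le).
- by move=> a; apply/leP; split.
- move=> a b c /leP [ab fab] /leP [bc fbc]; apply/leP; split.
    exact: subset_trans bc.
  by move=> u au; rewrite fbc ?fab //; exact: ab.
- move=> A Atot.
  have [[s0 As0]|nA] := pselect (exists s, A s); last first.
    by exists t0 => s As; exfalso; apply: nA; exists s.
  have common s1 s2 : A s1 -> A s2 -> exists s, [/\ A s, le s1 s & le s2 s].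
    move=> A1 A2; case: (Atot _ _ A1 A2) => h.
    - by exists s2; split => //; apply/leP; split.
    - by exists s1; split => //; apply/leP; split.
  pose Lu : set V := [set v | exists s, A s /\ (sval s).1 v].
  pose fu (v : V) : R := match pselect (exists s, A s /\ (sval s).1 v) with
    | left e => (sval (proj1_sig (cid e))).2 v | right _ => 0 end.
  have fuE s v : A s -> (sval s).1 v -> fu v = (sval s).2 v.
    move=> As sv; rewrite /fu; case: pselect => [e|N]; last first.
      by exfalso; apply: N; exists s.
    case: (cid e) => s' [As' s'v] /=.
    case: (Atot _ _ As As') => /leP [h1 h2]; first by rewrite h2.
    by rewrite h2.
  have gu : goodf Lb fb (Lu, fu).
    have G (s : T) : goodf Lb fb (sval s) by exact: (proj2_sig s).
    split => /=.
    - split; first by exists s0; split => //; case: (G s0) => [[]].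
      move=> a u w [s1 [A1 u1]] [s2 [A2 w2]].
      have [s [As /leP[h1 _] /leP[h2 _]]] := common _ _ A1 A2.
      exists s; split => //; case: (G s) => [[_ ]] H _ _ _ _; apply: H.
        exact: h1. exact: h2.
    - move=> a u w [s1 [A1 u1]] [s2 [A2 w2]].
      have [s [As /leP[h1 _] /leP[h2 _]]] := common _ _ A1 A2.
      have su := h1 _ u1; have sw := h2 _ w2.
      case: (G s) => sS lS _ _ _.
      rewrite !(fuE s) //; first exact: lS.
      by apply: sS.2.
    - by move=> u [s [As su]]; rewrite (fuE s) //; case: (G s) => _ _ H _ _; apply: H.
    - by move=> u Lbu; exists s0; split => //; case: (G s0) => _ _ _ H _; apply: H.
    - move=> u Lbu; case: (G s0) => _ _ _ H1 H2.
      by rewrite (fuE s0) // ?H2 //; apply: H1.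
  exists (exist _ (Lu, fu) gu) => s As; apply/leP; split => /=.
    by move=> v sv; exists s.
  by move=> u su; rewrite (fuE s).
case: t tmax => [[L f] [sL lf df bL fL]] /= tmax.
have LT : forall z, L z.
  move=> z1; apply: contrapT => nz1.
  pose E := [set f u - p (u - z1) | u in L].
  have E0 : E !=set0 by exists (f 0 - p (0 - z1)), 0 => //; exact: sL.1.
  have Eub : forall y, L y -> ubound E (p (y + z1) - f y).
    move=> y Ly _ [u Lu <-].
    have : f u + f y <= p (u - z1) + p (y + z1).
      rewrite -(lin_onD sL lf Lu Ly).
      apply: le_trans (df _ (subspD sL Lu Ly)) _.
      by have := psub (u - z1) (y + z1); rewrite addrACA addNr addr0.
    lra.
  have hs : has_sup E by split => //; exists (p (0 + z1) - f 0); apply: Eub; exact: sL.1.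
  have [g [sg [lg [dg gE]]]] := hb_step sL lf df nz1 (c := sup E)
    (fun u Lu => sup_upper_bound hs (ex_intro2 _ _ u Lu erefl))
    (fun u Lu => ge_sup E0 (Eub u Lu)).
  pose L' := [set w | exists u s, L u /\ w = u + s *: z1].
  have LL' : L `<=` L' by move=> u Lu; exists u, 0; rewrite scale0r addr0.
  have gf u : L u -> g u = f u.
    by move=> Lu; have := gE u 0 Lu; rewrite scale0r addr0 mul0r addr0.
  have gg : goodf Lb fb (L', g).
    split => //=.
    - by move=> u bu; exact (LL' _ (bL _ bu)).
    - by move=> u bu; rewrite gf; [exact (fL _ bu) | exact (bL _ bu)].
  have := tmax (exist _ (L', g) gg).
  have -> : le (exist _ (L, f) (And5 sL lf df bL fL)) (exist _ (L', g) gg).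
    by apply/leP; split => //= u Lu; rewrite gf.
  move=> /(_ isT) /leP [/= h _]; apply: nz1; apply: h.
  by exists 0, 1; rewrite scale1r add0r; split => //; exact: sL.1.
exists f; split; [|split].
- by move=> a u w; exact (lf a u w (LT u) (LT w)).
- by move=> u; exact (df u (LT u)).
- by move=> u bu; exact (fL u bu).
Qed.

Lemma hahn_banach z0 : exists F : V -> R,
  (forall a u w, F (a *: u + w) = a * F u + F w) /\
  (forall u, F u <= p u) /\ F z0 = p z0.
Proof.
pose L0 : set V := [set w | w = 0].
have s0 : subsp L0 by split => // a u w -> ->; rewrite scaler0 addr0.
have l0 : lin_on L0 (fun _ => 0) by move=> *; rewrite mulr0 addr0.
have d0 : forall u, L0 u -> (fun _ => 0) u <= p u by move=> u ->; rewrite p0.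
have [->|nz] := eqVneq z0 0.
  have [F [lF [dF eF]]] := hb_extend s0 l0 d0.
  by exists F; split => //; split => //; rewrite eF // p0.
have [g [sg [lg [dg gE]]]] := hb_step s0 l0 d0 (z1 := z0) (c := p z0)
  (fun (h : L0 z0) => (negP nz) (introT eqP h))
  (fun u (Lu : L0 u) => ltac:(rewrite Lu add0r sub0r;
       have := psub z0 (- z0); rewrite subrr p0; lra))
  (fun u (Lu : L0 u) => ltac:(rewrite Lu add0r subr0; lra)).
have [F [lF [dF eF]]] := hb_extend sg lg dg.
exists F; split => //; split => //.
rewrite eF; last by exists 0, 1; rewrite scale1r add0r.
by have := gE 0 1 erefl; rewrite scale1r add0r mul1r add0r.
Qed.
End HB.
Section Lin.
Variables (R : realType) (V : lmodType R) (F : V -> R).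
Hypothesis lF : forall a u w, F (a *: u + w) = a * F u + F w.
Let sT : subsp (@setT V). Proof. by split. Qed.
Let lT : lin_on setT F. Proof. by move=> a u w _ _; apply: lF. Qed.
Lemma linF0 : F 0 = 0. Proof. exact: (lin_on0 sT lT). Qed.
Lemma linFZ a u : F (a *: u) = a * F u. Proof. exact: (lin_onZ _ sT lT). Qed.
Lemma linFD u w : F (u + w) = F u + F w. Proof. exact: (lin_onD sT lT). Qed.
Lemma linFN u : F (- u) = - F u. Proof. by rewrite -scaleN1r linFZ mulN1r. Qed.
Lemma linFB u w : F (u - w) = F u - F w. Proof. by rewrite linFD linFN. Qed.
Lemma linF_sum I (r : seq I) (P : pred I) (a : I -> R) (u : I -> V) :
  F (\sum_(i <- r | P i) a i *: u i) = \sum_(i <- r | P i) a i * F (u i).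
Proof.
elim/big_rec2: _ => [|i y1 y2 _ <-]; first exact: linF0.
by rewrite linFD linFZ.
Qed.
End Lin.

Lemma sum_seq_ord (W : nmodType) (T : Type) (x0 : T) (s : seq T) (G : T -> W) :
  \sum_(q <- s) G q = \sum_(i < size s) G (nth x0 s i).
Proof. by rewrite (big_nth x0) big_mkord. Qed.

Section Sep.
Variables (R : realType).
Lemma vid (V : lmodType R) (x c0 A b y : V) (t : R) :
  (1 + t) *: y = c0 + A -> (x - c0) - ((A - t *: x) + b) = (1 + t) *: (x - y) - b.
Proof.
move=> Hy; rewrite scalerBr Hy scalerDl scale1r.
rewrite !opprD !opprK !addrA; congr (_ - _).
rewrite -!addrA; congr (_ + _).
by rewrite addrC -addrA addrC addrA.
Qed.


Variable (V : normedModType R).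
Lemma separation (C : set V) (x c0 : V) (rho : R) :
  0 < rho -> C c0 -> (forall y, convX C y -> rho <= `|x - y|) ->
  exists F : V -> R, (forall a u w, F (a *: u + w) = a * F u + F w) /\
    (forall z, F z <= `|z|) /\
    exists2 c, 0 < c & forall y, C y -> F y <= F x - c.
Proof.
move=> rho0 Cc0 far.
pose K : set V := [set k | exists (s : seq (R * V)) (b : V),
  [/\ (forall q, q \in s -> 0 <= q.1 /\ C q.2), `|b| <= rho * \sum_(q <- s) q.1
    & k = \sum_(q <- s) q.1 *: (q.2 - x) + b]].
have K0 : K 0.
  by exists [::], 0; split => //; rewrite ?big_nil ?normr0 ?mulr0 ?addr0.
have KD k1 k2 : K k1 -> K k2 -> K (k1 + k2).
  move=> [s1 [b1 [H1 n1 ->]]] [s2 [b2 [H2 n2 ->]]].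
  exists (s1 ++ s2), (b1 + b2); split.
  - by move=> q; rewrite mem_cat => /orP[/H1|/H2].
  - rewrite big_cat /= mulrDr; apply: le_trans (ler_normD _ _) _.
    exact: lerD.
  - by rewrite big_cat /= addrACA.
have KZ a k : 0 < a -> K k -> K (a *: k).
  move=> a0 [s [b [H n ->]]].
  exists (map (fun q => (a * q.1, q.2)) s), (a *: b); split.
  - move=> q /mapP [q' q's ->] /=; have [h1 h2] := H _ q's.
    by split => //; apply: mulr_ge0 => //; apply: ltW.
  - rewrite big_map /= -mulr_sumr normrZ gtr0_norm //.
    by rewrite mulrCA ler_pM2l.
  - rewrite big_map scalerDr scaler_sumr; congr (_ + _).
    by apply: eq_bigr => q _; rewrite scalerA.
have K1 c b : C c -> `|b| <= rho -> K (c - x + b).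
  move=> Cc nb; exists [:: (1, c)], b; split.
  - by move=> q; rewrite inE => /eqP -> /=; split.
  - by rewrite big_seq1 mulr1.
  - by rewrite big_seq1 scale1r.
have Kfar k : K k -> rho <= `|(x - c0) - k|.
  move=> [s [b [H nb ->]]].
  pose s' := (1, c0) :: s.
  pose T' := \sum_(q <- s') q.1.
  have H' q : q \in s' -> 0 <= q.1 /\ C q.2.
    by rewrite inE => /orP[/eqP -> /=|/H //]; split.
  have T'E : T' = 1 + \sum_(q <- s) q.1 by rewrite /T' big_cons.
  have T0 : 0 <= \sum_(q <- s) q.1.
    by rewrite big_seq; apply: sumr_ge0 => q /H [].
  have T'0 : 0 < T' by rewrite T'E; lra.
  pose y := T'^-1 *: \sum_(q <- s') q.1 *: q.2.
  have cy : convX C y.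
    exists (size s'), (fun i => (nth (0, c0) s' i).1 / T'),
      (fun i => (nth (0, c0) s' i).2); split.
    - move=> i; apply: divr_ge0; last exact: ltW.
      by case: (H' (nth (0, c0) s' i)) => //; apply: mem_nth.
    - rewrite -mulr_suml /T' (sum_seq_ord (0, c0) s' (fun q => q.1)).
      by rewrite mulfV ?gt_eqF // -(sum_seq_ord (0, c0) s' (fun q => q.1)).
    - move=> i; case: (H' (nth (0, c0) s' i)) => //; apply: mem_nth.
      by [].
    - rewrite /y scaler_sumr.
      rewrite (sum_seq_ord (0, c0) s' (fun q => T'^-1 *: (q.1 *: q.2))).
      by apply: eq_bigr => i _; rewrite scalerA mulrC.
  have E : (x - c0) - (\sum_(q <- s) q.1 *: (q.2 - x) + b) = T' *: (x - y) - b.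
    have -> : \sum_(q <- s) q.1 *: (q.2 - x) =
        \sum_(q <- s) q.1 *: q.2 - (\sum_(q <- s) q.1) *: x.
      rewrite scaler_suml -sumrB; apply: eq_bigr => q _; exact: scalerBr.
    rewrite T'E; apply: vid.
    rewrite -T'E /y scalerA mulfV ?gt_eqF // scale1r big_cons scale1r //.
  rewrite E.
  have h1 : `|T' *: (x - y)| - `|b| <= `|T' *: (x - y) - b|.
    have := ler_normD (T' *: (x - y) - b) b; rewrite subrK; lra.
  rewrite normrZ gtr0_norm // in h1.
  have := far _ cy; rewrite T'E in h1 *; nra.
pose E z := [set `|z - k| | k in K].
have hasinf z : has_inf (E z).
  split; first by exists `|z - 0|, 0.
  by exists 0 => _ [k _ <-].
pose q z := inf (E z).
have Q1 z k : K k -> q z <= `|z - k|.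
  by move=> Kk; apply: (ge_inf (hasinf z).2); exists k.
have Q2 z e : 0 < e -> exists2 k, K k & `|z - k| < q z + e.
  by move=> e0; have [_ [k Kk <-] h] := inf_adherent e0 (hasinf z); exists k.
have Q0 z : 0 <= q z.
  by apply: lb_le_inf (hasinf z).1 _ => _ [k _ <-].
have qsub : forall u w, q (u + w) <= q u + q w.
  move=> u w; apply/ler_addgt0Pr => e e0.
  have e2 : 0 < e / 2 by rewrite divr_gt0.
  have [k1 K1' h1] := Q2 u _ e2; have [k2 K2' h2] := Q2 w _ e2.
  apply: le_trans (Q1 _ _ (KD _ _ K1' K2')) _.
  have -> : u + w - (k1 + k2) = (u - k1) + (w - k2).
    by rewrite opprD addrACA.
  apply: le_trans (ler_normD _ _) _; lra.
have qhom : forall a u, 0 < a -> q (a *: u) = a * q u.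
  move=> a u a0; apply/eqP; rewrite eq_le; apply/andP; split.
  - apply/ler_addgt0Pr => e e0.
    have ea : 0 < e / a by rewrite divr_gt0.
    have [k Kk h] := Q2 u _ ea.
    apply: le_trans (Q1 _ _ (KZ _ _ a0 Kk)) _.
    rewrite -scalerBr normrZ gtr0_norm //.
    have : a * `|u - k| <= a * (q u + e / a) by rewrite ler_pM2l // ltW.
    by rewrite mulrDr mulrCA mulfV ?gt_eqF // mulr1.
  - apply/ler_addgt0Pr => e e0.
    have [k Kk h] := Q2 (a *: u) _ e0.
    have ai : 0 < a^-1 by rewrite invr_gt0.
    have := Q1 u _ (KZ _ _ ai Kk).
    have -> : u - a^-1 *: k = a^-1 *: (a *: u - k).
      by rewrite scalerBr scalerA mulVf ?gt_eqF // scale1r.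
    rewrite normrZ gtr0_norm // => h2.
    have : a * q u <= a * (a^-1 * `|a *: u - k|) by rewrite ler_pM2l.
    rewrite mulrA mulfV ?gt_eqF // mul1r; lra.
have [F [lF [dF eF]]] := hahn_banach qsub qhom (x - c0).
have qz0 : rho <= q (x - c0).
  by apply: lb_le_inf (hasinf _).1 _ => _ [k Kk <-]; apply: Kfar.
have nz0 : rho <= `|x - c0|.
  by apply: le_trans qz0 _; have := Q1 (x - c0) 0 K0; rewrite subr0.
have nz0' : 0 < `|x - c0| by apply: lt_le_trans nz0.
exists F; split => //; split.
  move=> z; apply: le_trans (dF z) _.
  by have := Q1 z 0 K0; rewrite subr0.
exists (rho / `|x - c0| * F (x - c0)).
  by apply: mulr_gt0; [apply: divr_gt0 | rewrite eF; apply: lt_le_trans qz0].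
move=> y Cy.
pose b := (rho / `|x - c0|) *: (x - c0).
have nb : `|b| <= rho.
  rewrite normrZ ger0_norm; last by apply: divr_ge0; [apply: ltW|].
  by rewrite -mulrA mulVf ?gt_eqF // mulr1.
have := dF (y - x + b).
have := Q1 (y - x + b) _ (K1 _ _ Cy nb); rewrite subrr normr0 => h0 h.
have := le_trans h h0.
rewrite (linFD lF) (linFB lF) /b (linFZ lF); lra.
Qed.
End Sep.
Section Main.
Variables (R : realType) (X : normedModType R).

Lemma entry_le_norm m (M : 'rV[R]_m) k : `|M ord0 k| <= `|M|.
Proof.
change (`|M ord0 k| <= mx_norm M); rewrite mx_normrE.
by apply/bigmax_geP; right => /=; exists (ord0, k).
Qed.

Lemma lin_cont (F : X -> R) :
  (forall a u w, F (a *: u + w) = a * F u + F w) -> (forall z, F z <= `|z|) ->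
  continuous F.
Proof.
move=> lF dF z; apply/cvgrPdist_lt => e e0.
apply/nbhs_ballP; exists e => // w /=; rewrite -ball_normE /= => hw.
rewrite -(linFB lF); apply: le_lt_trans hw.
rewrite ler_norml dF andbT lerNl -(linFN lF) -opprB opprK.
by apply: le_trans (dF _) _; rewrite -normrN opprB.
Qed.

Lemma key_pt (h : X -> (X -> R) -> \bar R) (xs : X -> R) (x : X)
    (xs' : X -> R) (x' : X) (c : R) :
  (hconj h xs (Defs.canon x) < +oo)%E -> (c%:E < hconj h xs' (Defs.canon x'))%E ->
  exists y ys r, [/\ dual ys, h y ys = r%:E, c < xs' y + ys x' - r &
    ((xs y + ys x - r)%:E <= hconj h xs (Defs.canon x))%E].
Proof.
move=> J /ereal_sup_gt [_ [[y ys] /= dys <-] hc].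
exists y, ys; move: hc.
case E: (h y ys) => [r| |] hc.
- exists r; split => //.
  apply: ereal_sup_ubound; exists (y, ys) => //=.
  by rewrite E /Defs.canon.
- by move: hc; rewrite /Defs.canon /=.
- exfalso; move: J; rewrite ltNge => /negP; apply.
  rewrite leye_eq; apply/eqP; apply/eqP; rewrite eq_le leey /=.
  apply: ereal_sup_ubound; exists (y, ys) => //=.
  by rewrite E.
Qed.

End Main.
Lemma dual_lin (R : realType) (X : normedModType R) (f : X -> R) :
  dual f -> forall a u w, f (a *: u + w) = a * f u + f w.
Proof. by case. Qed.

Lemma dualD (R : realType) (X : normedModType R) (f g : X -> R) :
  dual f -> dual g -> dual (fun y => f y + g y).
Proof.
move=> [lf cf] [lg cg]; split.
  by move=> a u w; rewrite lf lg; ring.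
by move=> z; apply: cvgD; [exact: cf | exact: cg].
Qed.

Lemma dualZ (R : realType) (X : normedModType R) (f : X -> R) (t : R) :
  dual f -> dual (fun y => t * f y).
Proof.
move=> [lf cf]; split.
  by move=> a u w; rewrite lf; ring.
by move=> z; apply: cvgM; [exact: cvg_cst | exact: cf].
Qed.

Lemma Jfin (R : realType) (X : normedModType R) (h : X -> (X -> R) -> \bar R) xs x :
  ((xs x)%:E <= hconj h xs (Defs.canon x))%E -> (hconj h xs (Defs.canon x) < +oo)%E ->
  exists Jr, hconj h xs (Defs.canon x) = Jr%:E /\ xs x <= Jr.
Proof.
case: (hconj h xs (Defs.canon x)) => [r| |] //= h1 h2.
by exists r; split => //; rewrite -lee_fin.
Qed.

Unset Implicit Arguments.
Theorem lemma3p2 (R : realType) (X : completeNormedModType R)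
    (h : X -> (X -> R) -> \bar R) :
  (forall (x : X) (xs : X -> R), dual xs -> ((xs x)%:E <= Jh h x xs)%E) ->
  [/\ snd @` domJh h = fst @` domconjX h,
      snd @` domJh h `<=` wstar_closure (convD (snd @` domh h)),
      fst @` domJh h = snd @` domconjX h
    & fst @` domJh h `<=` closure (convX (fst @` domh h))].
Proof.
move=> Hyp; split.
- apply/seteqP; split.
  + by move=> _ [[x xs] [d J] <-]; exists (xs, x).
  + by move=> _ [[xs x] [d J] <-]; exists (x, xs).
- move=> _ [[x xs] [/= d J] <-] /=; rewrite /= in J.
  have [Jr [JE Jge]] := Jfin (Hyp x xs d) J.
  pose S := snd @` domh h.
  have clA z del : 0 < del -> exists ys, S ys /\ xs z - (Jr - xs x) - del < ys z.
    move=> del0.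
    have hc : ((xs (x + z)%R - del)%:E < hconj h xs (Defs.canon (x + z)%R))%E.
      by apply: lt_le_trans (Hyp _ _ d); rewrite lte_fin; lra.
    have [y [ys [r [dys hr hlt hle]]]] := key_pt J hc.
    exists ys; split; first by exists (y, ys) => //; split => //; rewrite hr ltry.
    move: hlt hle; rewrite JE lee_fin.
    rewrite (linFD (dual_lin d)) (linFD (dual_lin dys)); lra.
  have clB z eta : 0 < eta -> exists ys, S ys /\ xs z - eta < ys z.
    move=> eta0.
    pose N := Jr - xs x + 1; have N0 : 0 < N by rewrite /N; lra.
    pose t := N / eta; have t0 : 0 < t by apply: divr_gt0.
    have teta : t * eta = N by rewrite /t -mulrA mulVf ?gt_eqF // mulr1.
    have [ys [Sys hys]] := clA (t *: z) 1 ltr01.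
    exists ys; split => //.
    have dys : dual ys by case: Sys => -[y ys'] [] /= + _ <-.
    move: hys; rewrite (linFZ (dual_lin d)) (linFZ (dual_lin dys)) => hys.
    rewrite /N in teta; nra.
  split; first exact: d.
  move=> m pts e e0.
  apply: contrapT => Hno.
  have [ys0 [Sys0 _]] := clB 0 1 ltr01.
  pose Phi (f : X -> R) : 'rV[R]_m := \row_k f (pts k).
  pose C := [set Phi f | f in S].
  have far : forall y, convX C y -> e <= `|Phi xs - y|.
    move=> y [n [w [p [w0 w1 Cp ->]]]].
    have Cp' : forall i, exists f, S f /\ Phi f = p i.
      by move=> i; case: (Cp i) => f Sf <-; exists f.
    have [f hf] := choice Cp'.
    pose g := fun z => \sum_(i < n) w i * f i z.
    have cg : convD S g.
      exists n, w, f; split => // i; by case: (hf i).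
    have : ~ (forall k, `|g (pts k) - xs (pts k)| < e).
      by move=> H; apply: Hno; exists g.
    move=> /existsNP [k /negP]; rewrite -leNgt => hk.
    apply: le_trans (entry_le_norm _ k).
    rewrite !mxE summxE distrC.
    have -> : \sum_(i < n) (w i *: p i) ord0 k = g (pts k).
      by rewrite /g; apply: eq_bigr => i _; rewrite mxE; case: (hf i) => _ <-; rewrite mxE.
    exact: hk.
  have [F [lF [dF [c c0 hF]]]] := separation e0 (imageP Phi Sys0) far.
  pose z0 := \sum_(k < m) F (delta_mx ord0 k) *: pts k.
  have PhiF f : dual f -> F (Phi f) = f z0.
    move=> df; rewrite {1}(row_sum_delta (Phi f)) (linF_sum lF) /z0.
    rewrite (linF_sum (dual_lin df)); apply: eq_bigr => k _.
    by rewrite mxE mulrC.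
  have [ys [Sys hys]] := clB z0 c c0.
  have dys : dual ys by case: Sys => -[y ys'] [] /= + _ <-.
  have := hF _ (imageP Phi Sys); rewrite !PhiF //; lra.
- apply/seteqP; split.
  + by move=> _ [[x xs] [d J] <-]; exists (xs, x).
  + by move=> _ [[xs x] [d J] <-]; exists (x, xs).
- move=> _ [[x xs] [/= d J] <-] /=; rewrite /= in J.
  have [Jr [JE Jge]] := Jfin (Hyp x xs d) J.
  pose P := fst @` domh h.
  have clA zs del : dual zs -> 0 < del -> exists y, P y /\ zs x - (Jr - xs x) - del < zs y.
    move=> dzs del0.
    have dxz := dualD d dzs.
    have hc : ((xs x + zs x - del)%:E < hconj h (fun y => xs y + zs y)%R (Defs.canon x))%E.
      by apply: lt_le_trans (Hyp _ _ dxz); rewrite lte_fin; lra.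
    have [y [ys [r [dys hr hlt hle]]]] := key_pt J hc.
    exists y; split; first by exists (y, ys) => //; split => //; rewrite hr ltry.
    move: hlt hle; rewrite JE lee_fin; lra.
  have clB zs eta : dual zs -> 0 < eta -> exists y, P y /\ zs x - eta < zs y.
    move=> dzs eta0.
    pose N := Jr - xs x + 1; have N0 : 0 < N by rewrite /N; lra.
    pose t := N / eta; have t0 : 0 < t by apply: divr_gt0.
    have teta : t * eta = N by rewrite /t -mulrA mulVf ?gt_eqF // mulr1.
    have [y [Py hy]] := clA _ 1 (dualZ t dzs) ltr01.
    exists y; split => //.
    rewrite /N in teta; nra.
  move=> B /nbhs_ballP [rho rho0 Bb].
  apply: contrapT => Hno.
  have far : forall y, convX P y -> rho <= `|x - y|.
    move=> y cy; rewrite leNgt; apply/negP => hy.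
    apply: Hno; exists y; split => //; apply: Bb.
    by rewrite -ball_normE.
  have [c0 Pc0] : exists c0, P c0.
    have [y [Py _]] := clB _ 1 (dualZ 0 d) ltr01.
    by exists y.
  have [F [lF [dF [c cpos hF]]]] := separation rho0 Pc0 far.
  have dFd : dual F by split => //; exact: lin_cont.
  have [y [Py hy]] := clB F c dFd cpos.
  have := hF _ Py; lra.
Qed.
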